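(* Let $E$ be a finite set and $\underline I=(I_\omega)_{\omega\in E}$ a family of non-empty finite sets. For any two causal orders $\Omega$ and $\Xi$ on $E$, $\Omega\le\Xi$ if and only if $\mathrm{ExtHist}(\Omega,\underline I)\supseteq\mathrm{ExtHist}(\Xi,\underline I)$.
   Context: A causal order $\Omega$ on $E$ is a preorder $\le_\Omega$ on $E$; $\Omega\le\Xi$ iff $\le_\Omega\subseteq\le_\Xi$. $\Lambda(\Omega)$ is the set of lowersets (subsets $U$ with $\xi\le_\Omega\omega\in U\Rightarrow\xi\in U$). $\mathrm{ExtHist}(\Omega,\underline I)=\bigcup_{U\in\Lambda(\Omega)}\prod_{\omega\in U}I_\omega$, i.e. all functions with domain a lowerset $U$ of $\Omega$ and values $f(\omega)\in I_\omega$. *)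

(* Defs.v *)
From mathcomp Require Import all_boot.
Set Implicit Arguments. Unset Strict Implicit. Unset Printing Implicit Defensive.

Definition causal_order (E : finType) (le : rel E) : Prop :=
  reflexive le /\ transitive le.

Definition order_le (E : finType) (leO leX : rel E) : Prop :=
  forall x y, leO x y -> leX x y.

Definition lowerset (E : finType) (le : rel E) (U : {set E}) : Prop :=
  forall xi om, le xi om -> om \in U -> xi \in U.

(* A partial function with domain U and values f w in I w is encoded as
   h : forall w, option (I w), defined (Some) exactly on its domain. *)
Definition pfun (E : finType) (I : E -> finType) := forall w : E, option (I w).

Definition pdom (E : finType) (I : E -> finType) (h : pfun I) : {set E} :=
  [set w | h w != None].

(* ExtHist(Omega, I) = union over lowersets U of prod_{w in U} I_w. *)
Definition ExtHist (E : finType) (I : E -> finType) (le : rel E) : pfun I -> Prop :=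
  fun h => lowerset le (pdom h).
Arguments ExtHist E I le h : clear implicits.

(* Main.v *)
Require Import Defs.
From mathcomp Require Import all_boot.

Theorem proposition5 (E : finType) (I : E -> finType)
    (hI : forall w : E, inhabited (I w))
    (leO leX : rel E) (hO : causal_order leO) (hX : causal_order leX) :
  order_le leO leX <->
  (forall h : pfun I, ExtHist E I leX h -> ExtHist E I leO h).
Proof.
split.
- move=> Hle h Hh xi om Hxo Hom; exact: (Hh xi om (Hle _ _ Hxo) Hom).
- move=> H x y Hxy.
  have Hp : forall w, [pick i : I w] != None.
    move=> w; case: (hI w) => i; case: pickP => // /(_ i).
    by [].
  pose h : pfun I := fun w => if leX w y then [pick i : I w] else None.
  have Hd : forall w, (w \in pdom h) = leX w y.
    move=> w; rewrite /pdom inE /h; by case: (leX w y) => //=; rewrite Hp.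
  have HX : ExtHist E I leX h.
    move=> a b Hab; rewrite !Hd => Hb; case: hX => _ Ht; exact: Ht Hab Hb.
  have := H h HX x y Hxy; rewrite !Hd; apply; case: hX => Hr _; exact: Hr.
Qed.
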